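(* Let $V=V_{\widehat{\mathfrak h}}(1,0)$, $\omega=\omega_0$, and $\omega'\in\operatorname{Sc}(V,\omega)$ with $Y(\omega',z)=\sum_nL'(n)z^{-n-2}$. Identifying $V_1$ with $\mathfrak h$ via $h(-1)\mathbf 1\leftrightarrow h$, one has $\operatorname{Im}\mathcal A_{\omega'}=\operatorname{Ker}_V(L(-1)-L'(-1))\cap V_1$ and $\operatorname{Ker}\mathcal A_{\omega'}=\operatorname{Ker}_VL'(-1)\cap V_1$.
   Context: $\mathfrak h$: $d$-dimensional complex space with nondegenerate symmetric bilinear form and fixed orthonormal basis $h_1,\dots,h_d$; $V_{\widehat{\mathfrak h}}(1,0)$ the level 1 Heisenberg vertex algebra, $\omega_0=\frac12\sum_ih_i(-1)^2\mathbf 1$, $Y(\omega_0,z)=\sum_nL(n)z^{-n-2}$. For $\omega'=\sum_{i\le j}a_{ij}h_i(-1)h_j(-1)\mathbf 1+\sum_ib_ih_i(-2)\mathbf 1$, $\mathcal A_{\omega'}\in\operatorname{End}(\mathfrak h)$ has matrix the symmetric matrix with diagonal $2a_{ii}$ and off-diagonal $a_{ij}$. Semi-conformal vectors: conformal vectors $\omega'$ of vertex operator subalgebras $(U,\omega')$ with $\omega_n|_U=\omega'_n|_U$ for $n\ge 0$. *)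

(* Defs.v *)
From HB Require Import structures.
From mathcomp Require Import all_boot all_order all_algebra.
Set Implicit Arguments. Unset Strict Implicit. Unset Printing Implicit Defensive.
Import Order.TTheory GRing.Theory Num.Theory.
Local Open Scope ring_scope.

Definition gbinom (C : fieldType) (m : int) (i : nat) : C :=
  (\prod_(j < i) (m%:~R - j%:R)) / (i`!)%:R.
Arguments gbinom C m i : clear implicits.

Section VA.
Variables (C : fieldType) (V : lmodType C).
(* Y u n v = u_n v  (the n-th mode of the vertex operator Y(u,z)) *)
Variable Y : V -> int -> V -> V.
Variable vac : V.

Record is_VA : Prop := {
  va_linr : forall u n a v w, Y u n (a *: v + w) = a *: Y u n v + Y u n w;
  va_linl : forall u u' n a v, Y (a *: u + u') n v = a *: Y u n v + Y u' n v;
  va_trunc : forall u v, exists k : int, forall n : int, k <= n -> Y u n v = 0;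
  va_vac : forall (n : int) v, Y vac n v = if n == -1 then v else 0;
  va_creation : forall u, Y u (-1) vac = u /\ forall n : int, 0 <= n -> Y u n vac = 0;
  va_borcherds : forall u v w (m n r : int), exists N0 : nat, forall N : nat, (N0 <= N)%N ->
    \sum_(i < N) gbinom C m i *: Y (Y u (r + i%:Z) v) (m + n - i%:Z) w =
    \sum_(i < N) ((-1) ^+ i * gbinom C r i) *:
        (Y u (m + r - i%:Z) (Y v (n + i%:Z) w)
         - (-1) ^ r *: Y v (n + r - i%:Z) (Y u (m + i%:Z) w))
}.

Definition generates (S : V -> Prop) : Prop :=
  forall W : V -> Prop, W vac -> (forall s, S s -> W s) ->
    (forall a x y, W x -> W y -> W (a *: x + y)) ->
    (forall x y n, W x -> W y -> W (Y x n y)) -> forall v, W v.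

(* (V, Y, vac) is the level one Heisenberg vertex algebra V_{\hat h}(1,0) for
   the d-dimensional h with orthonormal basis h_1..h_d; here h i = h_i(-1)1 *)
Record is_heisenberg (d : nat) (h : 'I_d -> V) : Prop := {
  heis_va : is_VA;
  heis_nonzero : vac != 0;
  heis_rel : forall (i j : 'I_d) (m : int), 0 <= m ->
     Y (h i) m (h j) = if (m == 1) && (i == j) then vac else 0;
  heis_gen : generates (fun v => exists i, v = h i)
}.

(* (U, Y|_U, vac, w) is a vertex operator subalgebra of V with conformal vector w;
   L_w(n) = w_{n+1} *)
Record is_VOA_sub (U : V -> Prop) (w : V) : Prop := {
  sub_vac : U vac;
  sub_w : U w;
  sub_lin : forall a x y, U x -> U y -> U (a *: x + y);
  sub_mode : forall x y n, U x -> U y -> U (Y x n y);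
  sub_vir : exists c : C, forall (m n : int) u, U u ->
     Y w (m + 1) (Y w (n + 1) u) - Y w (n + 1) (Y w (m + 1) u) =
     (m - n)%:~R *: Y w (m + n + 1) u
     + (if m + n == 0 then ((m ^+ 3 - m)%:~R / 12%:R * c) else 0) *: u;
  sub_deriv : forall u x (n : int), U u -> U x ->
     Y (Y w 0 u) n x = (- n%:~R) *: Y u (n - 1) x;
  sub_grad : forall u, U u -> exists s : seq (int * V),
     u = \sum_(p <- s) p.2 /\
     forall p, p \in s -> U p.2 /\ Y w 1 p.2 = p.1%:~R *: p.2;
  sub_fin : forall n : int, exists s : seq V, forall u, U u ->
     Y w 1 u = n%:~R *: u ->
     exists c : 'I_(size s) -> C, u = \sum_(j < size s) c j *: nth 0 s j;
  sub_low : exists N : int, forall n : int, n < N -> forall u, U u ->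
     Y w 1 u = n%:~R *: u -> u = 0
}.

Definition semi_conformal (om w' : V) : Prop :=
  exists U : V -> Prop, is_VOA_sub U w' /\
    forall (n : int) u, 0 <= n -> U u -> Y om n u = Y w' n u.

End VA.

Section Heis.
Variables (C : fieldType) (V : lmodType C) (Y : V -> int -> V -> V) (vac : V).
Variables (d : nat) (h : 'I_d -> V).

Definition omega0 : V := (2%:R : C)^-1 *: \sum_(i < d) Y (h i) (-1) (h i).

Definition omega' (a : 'I_d -> 'I_d -> C) (b : 'I_d -> C) : V :=
  \sum_(i < d) \sum_(j < d | (i <= j)%N) a i j *: Y (h i) (-1) (h j)
  + \sum_(i < d) b i *: Y (h i) (-2) vac.

(* the element x = sum_i x_i h_i of h, viewed in V_1 as h(-1)1 *)
Definition hvec (x : 'cV[C]_d) : V := \sum_(i < d) x i 0 *: h i.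

End Heis.

Definition Amat (C : fieldType) (d : nat) (a : 'I_d -> 'I_d -> C) : 'M[C]_d :=
  \matrix_(i, j) (if i == j then 2%:R * a i i
                  else if (i < j)%N then a i j else a j i).

(* Main.v *)
Require Import Defs.
From HB Require Import structures.
From mathcomp Require Import all_boot all_order all_algebra.
From mathcomp Require Import zify.
Import Order.TTheory GRing.Theory Num.Theory.
Set Implicit Arguments. Unset Strict Implicit. Unset Printing Implicit Defensive.
Local Open Scope ring_scope.

Section Work.
Variables (C : numClosedFieldType) (V : lmodType C) (Y : V -> int -> V -> V) (vac : V).
Variables (d : nat) (h : 'I_d -> V).
Hypothesis HH : is_heisenberg Y vac h.

Let HV : is_VA Y vac := heis_va HH.

Lemma YD u n v w : Y u n (v + w) = Y u n v + Y u n w.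
Proof. by have := va_linr HV u n 1 v w; rewrite !scale1r. Qed.
Lemma Y0r u n : Y u n 0 = 0.
Proof.
have := YD u n 0 0; rewrite addr0 => H.
by apply/esym/(@addrI _ (Y u n 0)); rewrite addr0 -H.
Qed.
Lemma YZr u n c v : Y u n (c *: v) = c *: Y u n v.
Proof. by have := va_linr HV u n c v 0; rewrite !addr0 Y0r addr0. Qed.
Lemma YNr u n v : Y u n (- v) = - Y u n v.
Proof. by rewrite -scaleN1r YZr scaleN1r. Qed.
Lemma YBr u n v w : Y u n (v - w) = Y u n v - Y u n w.
Proof. by rewrite YD YNr. Qed.
Lemma YDl u u' n v : Y (u + u') n v = Y u n v + Y u' n v.
Proof. by have := va_linl HV u u' n 1 v; rewrite !scale1r. Qed.
Lemma Y0l n v : Y 0 n v = 0.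
Proof.
have := YDl 0 0 n v; rewrite addr0 => H.
by apply/esym/(@addrI _ (Y 0 n v)); rewrite addr0 -H.
Qed.
Lemma YZl u n c v : Y (c *: u) n v = c *: Y u n v.
Proof. by have := va_linl HV u 0 n c v; rewrite !addr0 Y0l addr0. Qed.
Lemma YNl u n v : Y (- u) n v = - Y u n v.
Proof. by rewrite -scaleN1r YZl scaleN1r. Qed.
Lemma YBl u u' n v : Y (u - u') n v = Y u n v - Y u' n v.
Proof. by rewrite YDl YNl. Qed.

Lemma Ysumr u n I (r : seq I) (P : pred I) (F : I -> V) :
  Y u n (\sum_(i <- r | P i) F i) = \sum_(i <- r | P i) Y u n (F i).
Proof. exact: (big_morph (Y u n) (YD u n) (Y0r u n)). Qed.
Lemma Ysuml v n I (r : seq I) (P : pred I) (F : I -> V) :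
  Y (\sum_(i <- r | P i) F i) n v = \sum_(i <- r | P i) Y (F i) n v.
Proof. exact: (big_morph (fun u => Y u n v) (fun x y => YDl x y n v) (Y0l n v)). Qed.

Lemma Yvac n v : Y vac n v = if n == -1 then v else 0.
Proof. by rewrite (va_vac HV). Qed.
Lemma Ycr u : Y u (-1) vac = u.
Proof. by case: (va_creation HV u). Qed.
Lemma Yann u n : 0 <= n -> Y u n vac = 0.
Proof. by case: (va_creation HV u) => _; apply. Qed.

Lemma hrel i j m : 0 <= m -> Y (h i) m (h j) = if (m == 1) && (i == j) then vac else 0.
Proof. by move=> Hm; rewrite (heis_rel HH). Qed.

Lemma gb0 m : gbinom C m 0 = 1.
Proof. by rewrite /gbinom big_ord0 fact0 divr1. Qed.
Lemma gb1 m : gbinom C m 1 = m%:~R.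
Proof. by rewrite /gbinom big_ord1 divr1 subr0. Qed.
Lemma gb0S i : gbinom C 0 i.+1 = 0.
Proof. by rewrite /gbinom big_ord_recl /= subrr mul0r mul0r. Qed.
Lemma gb1SS i : gbinom C 1 i.+2 = 0.
Proof. by rewrite /gbinom !big_ord_recl /= subrr mul0r mulr0 mul0r. Qed.


Lemma bump0n i : bump 0 i = i.+1. Proof. by []. Qed.

Lemma hcomm i j (n m : int) w :
  Y (h i) n (Y (h j) m w) - Y (h j) m (Y (h i) n w) =
  (if (i == j) && (n + m == 0) then n%:~R else 0) *: w.
Proof.
have [N0 HN] := va_borcherds HV (h i) (h j) w n m 0.
have := HN N0.+2 (leq_trans (leqnSn _) (leqnSn _)).
rewrite !big_ord_recl /= !bump0n.
rewrite big1; last first.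
  by move=> l _; rewrite add0r hrel // !bump0n /= Y0l scaler0.
rewrite [X in _ = _ + (_ + X)]big1; last first.
  by move=> l _; rewrite !bump0n gb0S mulr0 scale0r.
rewrite gb0S mulr0 scale0r !addr0.
rewrite hrel // Y0l scaler0 add0r add0r hrel // gb0 gb1 expr0 mul1r expr0z !scale1r.
move=> <-.
case: (i == j) => /=.
  rewrite Yvac; case: eqP => [Hnm|Hnm]; case: eqP => Hnm' //; try lia.
  by rewrite scaler0 scale0r.
by rewrite Y0l scaler0 scale0r.
Qed.

Lemma hcomm' i j (n m : int) w :
  Y (h i) n (Y (h j) m w) =
  Y (h j) m (Y (h i) n w) + (if (i == j) && (n + m == 0) then n%:~R else 0) *: w.
Proof. by rewrite -hcomm addrC subrK. Qed.

Lemma hvac i n : 0 <= n -> Y (h i) n vac = 0.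
Proof. exact: Yann. Qed.

Lemma gbm1_1 : gbinom C (-1) 1 = -1.
Proof. by rewrite gb1. Qed.

Lemma assoc_hh a b k (n : int) : 0 <= n ->
  Y (Y (h a) (-1) (h b)) n (h k) =
  (Y (h a) (-1) (Y (h b) n (h k)) + Y (h b) (n - 1) (Y (h a) 0 (h k))) +
  (Y (h a) (-2) (Y (h b) (n + 1) (h k)) + Y (h b) (n - 2) (Y (h a) 1 (h k))).
Proof.
move=> Hn.
have [N0 HN] := va_borcherds HV (h a) (h b) (h k) 0 n (-1).
have := HN N0.+2 (leq_trans (leqnSn _) (leqnSn _)).
rewrite !big_ord_recl /= !bump0n.
rewrite big1; last by move=> l _; rewrite gb0S scale0r.
rewrite [X in _ = _ + (_ + X)]big1; last first.
  move=> l _; rewrite !bump0n !hrel; try lia.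
  rewrite (_ : (n + (l.+2)%:Z == 1) = false); last by apply/eqP; lia.
  rewrite (_ : (0 + (l.+2)%:Z == 1) = false); last by apply/eqP; lia.
  by rewrite /= !Y0r scaler0 subrr scaler0.
rewrite gb0S scale0r !addr0 gb0 scale1r !add0r expr0 mul1r gbm1_1 expr1 mulrNN mul1r.
rewrite exprN1 invrN1 !scaleN1r !opprK scale1r.
rewrite (_ : 0 - 1 - 1%:Z = -2) // (_ : n - 1 - 1%:Z = n - 2); last by lia.
by rewrite gb0 scale1r => ->.
Qed.

Lemma assoc0 a b k :
  Y (Y (h a) (-1) (h b)) 0 (h k) =
  (if b == k then Y (h a) (-2) vac else 0) + (if a == k then Y (h b) (-2) vac else 0).
Proof.
rewrite assoc_hh // !hrel //= !Y0r !addr0 add0r.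
by case: (b == k); case: (a == k); rewrite /= ?Y0r.
Qed.

Lemma assoc1 a b k :
  Y (Y (h a) (-1) (h b)) 1 (h k) =
  (if b == k then h a else 0) + (if a == k then h b else 0).
Proof.
rewrite assoc_hh // !hrel //= !Y0r !addr0 add0r.
by case: (b == k); case: (a == k); rewrite /= ?Y0r ?Ycr.
Qed.

Lemma vac2 a k (n : int) : (n == 0) || (n == 1) ->
  Y (Y (h a) (-2) vac) n (h k) = 0.
Proof.
move=> Hn.
have [N0 HN] := va_borcherds HV (h a) vac (h k) 0 n (-2).
have := HN N0.+1 (leqnSn _).
rewrite big_ord_recl big1; last by move=> l _; rewrite /= bump0n gb0S scale0r.
rewrite /= gb0 scale1r addr0 !add0r !subr0 => ->.
apply: big1 => l _.
rewrite !Yvac.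
rewrite (_ : (n + l%:Z == -1) = false); last by apply/eqP; move/orP: Hn => [/eqP|/eqP]; lia.
case: eqP => Hl.
  have -> : nat_of_ord l = 0%N by move/orP: Hn => [/eqP|/eqP]; lia.
  by rewrite hrel //= Y0r scaler0 subrr scaler0.
by rewrite Y0r scaler0 subrr scaler0.
Qed.

Lemma sum_if (F : 'I_d -> V) k : \sum_j (if j == k then F j else 0) = F k.
Proof. by rewrite -big_mkcond big_pred1_eq. Qed.

Lemma sumA (a : 'I_d -> 'I_d -> C) (X : 'I_d -> V) (k : 'I_d) :
  \sum_(i < d) \sum_(j < d | (i <= j)%N) a i j *: ((if j == k then X i else 0) + (if i == k then X j else 0))
  = \sum_(m < d) Amat a m k *: X m.
Proof.
have E1 (i : 'I_d) : \sum_(j < d | (i <= j)%N) a i j *: (if j == k then X i else 0) =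
    if (i <= k)%N then a i k *: X i else 0.
  rewrite big_mkcond /=.
  rewrite (eq_bigr (fun j => if j == k then (if (i <= k)%N then a i k *: X i else 0) else 0)).
    by rewrite (sum_if (fun _ => if (i <= k)%N then a i k *: X i else 0)).
  by move=> j _; case: eqP => [->|_]; case: ifP => //; rewrite scaler0.
have E2 : \sum_(i < d) \sum_(j < d | (i <= j)%N) a i j *: (if i == k then X j else 0) =
    \sum_(j < d | (k <= j)%N) a k j *: X j.
  rewrite (eq_bigr (fun i => if i == k then \sum_(j < d | (i <= j)%N) a i j *: X j else 0)).
    by rewrite (sum_if (fun i => \sum_(j < d | (i <= j)%N) a i j *: X j)).
  move=> i _; case: eqP => _ //.
  by rewrite big1 // => j _; rewrite scaler0.
transitivity (\sum_(i < d) ((if (i <= k)%N then a i k *: X i else 0) +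
   \sum_(j < d | (i <= j)%N) a i j *: (if i == k then X j else 0))).
  apply: eq_bigr => i _; rewrite -E1 -big_split; apply: eq_bigr => j _.
  by rewrite scalerDr.
rewrite big_split /= E2 [in X in _ + X = _]big_mkcond /= -big_split /=.
apply: eq_bigr => m _; rewrite mxE.
case: (ltngtP m k) => H.
- by rewrite addr0 ifF //; apply/eqP => E; rewrite E ltnn in H.
- by rewrite add0r ifF //; apply/eqP => E; rewrite E ltnn in H.
- have E : m = k by apply: val_inj.
  rewrite E eqxx -scalerDl; congr (_ *: _).
  by rewrite mulr_natl mulr2n.
Qed.

Notation Om := (omega' Y vac h).

Lemma Om0 a b k : Y (Om a b) 0 (h k) = \sum_(m < d) Amat a m k *: Y (h m) (-2) vac.
Proof.
rewrite /omega' YDl.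
have -> : Y (\sum_(i < d) b i *: Y (h i) (-2) vac) 0 (h k) = 0.
  by rewrite Ysuml big1 // => i _; rewrite YZl vac2 ?scaler0.
rewrite addr0 Ysuml.
rewrite -(sumA a (fun m => Y (h m) (-2) vac)); apply: eq_bigr => i _.
by rewrite Ysuml; apply: eq_bigr => j _; rewrite YZl assoc0.
Qed.

Lemma Om1 a b k : Y (Om a b) 1 (h k) = \sum_(m < d) Amat a m k *: h m.
Proof.
rewrite /omega' YDl.
have -> : Y (\sum_(i < d) b i *: Y (h i) (-2) vac) 1 (h k) = 0.
  by rewrite Ysuml big1 // => i _; rewrite YZl vac2 ?scaler0.
rewrite addr0 Ysuml.
rewrite -(sumA a h); apply: eq_bigr => i _.
by rewrite Ysuml; apply: eq_bigr => j _; rewrite YZl assoc1.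
Qed.

Lemma hOm a b k (l : int) : 0 <= l ->
  Y (h k) l (Om a b) = (if l == 1 then \sum_(m < d) Amat a m k *: h m else 0)
                      + (if l == 2 then (2%:R * b k) *: vac else 0).
Proof.
move=> Hl; rewrite /omega' YD !Ysumr.
congr (_ + _).
  have [El|Hl1] := eqVneq l 1.
    rewrite -sumA; apply: eq_bigr => i _; rewrite Ysumr; apply: eq_bigr => j _.
    rewrite YZr hcomm' hrel // El /= eq_sym [k == i]eq_sym.
    case: (j == k); case: (i == k); by rewrite /= ?Y0r ?Ycr ?scale1r ?scale0r ?addr0 ?add0r.
  apply: big1 => i _; rewrite Ysumr big1 // => j _.
  rewrite YZr hcomm' hrel // (negbTE Hl1) /= Y0r add0r.
  rewrite (_ : l + -1 == 0 = false) ?andbF ?scale0r ?scaler0 //.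
  by apply/eqP => E; move/eqP: Hl1; apply; lia.
have [El|Hl2] := eqVneq l 2.
  rewrite (eq_bigr (fun i => if i == k then (2%:R * b k) *: vac else 0)).
    by rewrite (sum_if (fun _ => (2%:R * b k) *: vac)).
  move=> i _; rewrite YZr hcomm' hvac // Y0r add0r El eq_sym.
  case: eqP => [->|_] /=; last by rewrite scale0r scaler0.
  by rewrite scalerA mulrC.
apply: big1 => i _; rewrite YZr hcomm' hvac // Y0r add0r.
rewrite (_ : l + -2 == 0 = false) ?andbF ?scale0r ?scaler0 //.
by apply/eqP => E; move/eqP: Hl2; apply; lia.
Qed.

Lemma cOm a b k (n : int) w :
  Y (h k) n (Y (Om a b) 1 w) - Y (Om a b) 1 (Y (h k) n w) =
  n%:~R *: \sum_(m < d) Amat a m k *: Y (h m) n w.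
Proof.
have [N0 HN] := va_borcherds HV (h k) (Om a b) w n 1 0.
have := HN N0.+3 (leq_trans (leqnSn _) (leq_trans (leqnSn _) (leqnSn _))).
rewrite !big_ord_recl /= !bump0n.
rewrite big1; last first.
  by move=> l _; rewrite hOm // add0r /= Y0l scaler0.
rewrite [X in _ = _ + (_ + (_ + X))]big1; last first.
  by move=> l _; rewrite gb0S mulr0 scale0r.
rewrite !gb0S !mulr0 !scale0r !addr0 expr0 mul1r gb0 expr0z !scale1r.
rewrite !add0r !hOm //= !addr0 !add0r Y0l add0r gb0 scale1r => <-.
rewrite gb1 (_ : n + 1 - 1%:Z = n); last by lia.
rewrite Ysuml (eq_bigr (fun m => Amat a m k *: Y (h m) n w)); last first.
  by move=> m _; rewrite YZl.
rewrite -[RHS]addr0; congr (_ + _).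
rewrite YZl Yvac; case: eqP => [E|_]; last by rewrite !scaler0.
have -> : n = 0 by lia.
by rewrite gb0S scale0r.
Qed.

Definition a0 : 'I_d -> 'I_d -> C := fun i j => if i == j then 2%:R^-1 else 0.

Lemma two_neq0 : (2%:R : C) != 0.
Proof. by rewrite pnatr_eq0. Qed.

Lemma omega0E : omega0 Y h = Om a0 (fun _ => 0).
Proof.
rewrite /omega0 /omega'.
rewrite [X in _ = _ + X]big1 ?addr0; last by move=> i _; rewrite scale0r.
rewrite scaler_sumr; apply: eq_bigr => i _.
rewrite (bigD1 i) //= big1 ?addr0; first by rewrite /a0 eqxx.
by move=> j /andP [_ Hj]; rewrite /a0 eq_sym (negbTE Hj) scale0r.
Qed.

Lemma Amat_a0 : Amat a0 = 1%:M.
Proof.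
apply/matrixP => i j; rewrite !mxE /a0.
case: (eqVneq i j) => [->|Hne]; first by rewrite eqxx mulfV ?two_neq0.
by case: ifP.
Qed.

Lemma sum_id (X : 'I_d -> V) k : \sum_(m < d) (1%:M : 'M[C]_d) m k *: X m = X k.
Proof.
rewrite (eq_bigr (fun m => if m == k then X m else 0)) ?sum_if // => m _.
by rewrite mxE; case: eqP => _; rewrite ?scale1r ?scale0r.
Qed.

Notation om := (omega0 Y h).

Lemma L0h k n w : Y om 1 (Y (h k) n w) = Y (h k) n (Y om 1 w) - n%:~R *: Y (h k) n w.
Proof.
have := cOm a0 (fun _ => 0) k n w; rewrite -omega0E Amat_a0 sum_id => <-.
by rewrite opprB addrC subrK.
Qed.

Lemma L0vac : Y om 1 vac = 0.
Proof. exact: Yann. Qed.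

Inductive Q : int -> V -> Prop :=
| Qvac : Q 0 vac
| Qsc k c u : Q k u -> Q k (c *: u)
| Qh k i n u : n < 0 -> Q k u -> Q (k - n) (Y (h i) n u).

Inductive NN : V -> Prop :=
| NN0 : NN 0
| NNadd k u w : Q k u -> NN w -> NN (u + w).

Lemma NN_Q k u : Q k u -> NN u.
Proof. by move=> Hu; rewrite -[u]addr0; apply: NNadd Hu NN0. Qed.

Lemma NN_add x y : NN x -> NN y -> NN (x + y).
Proof.
move=> Hx Hy; elim: Hx => [|k u w Qu Nw IH]; first by rewrite add0r.
by rewrite -addrA; apply: NNadd Qu IH.
Qed.

Lemma NN_sc c x : NN x -> NN (c *: x).
Proof.
elim=> [|k u w Qu Nw IH]; first by rewrite scaler0; exact: NN0.
by rewrite scalerDr; apply: NNadd (Qsc c Qu) IH.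
Qed.

Lemma NN_opp x : NN x -> NN (- x).
Proof. by move=> Hx; rewrite -scaleN1r; apply: NN_sc. Qed.

Lemma NN_sum N (F : 'I_N -> V) : (forall i, NN (F i)) -> NN (\sum_(i < N) F i).
Proof.
move=> HF; apply: (big_ind NN) => //; first exact: NN0.
exact: NN_add.
Qed.

Lemma NN_hneg i n x : n < 0 -> NN x -> NN (Y (h i) n x).
Proof.
move=> Hn; elim=> [|k u w Qu Nw IH]; first by rewrite Y0r; exact: NN0.
by rewrite YD; apply: NN_add IH; apply: NN_Q (Qh i Hn Qu).
Qed.

Lemma Q_hpos k u : Q k u -> forall i n, 0 <= n -> NN (Y (h i) n u).
Proof.
elim=> [|k' c u' Qu IH|k' j m u' Hm Qu IH] i n Hn.
- by rewrite hvac //; exact: NN0.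
- by rewrite YZr; apply: NN_sc; apply: IH.
- rewrite hcomm'; apply: NN_add.
    by apply: NN_hneg Hm (IH i n Hn).
  by apply: NN_sc; apply: NN_Q Qu.
Qed.

Lemma NN_h i n x : NN x -> NN (Y (h i) n x).
Proof.
elim=> [|k u w Qu Nw IH]; first by rewrite Y0r; exact: NN0.
rewrite YD; apply: NN_add IH.
case: (ltP n 0) => Hn; first by apply: NN_Q (Qh i Hn Qu).
exact: Q_hpos Qu i n Hn.
Qed.

Lemma Q_Y k u : Q k u -> forall n y, NN y -> NN (Y u n y).
Proof.
elim=> [|k' c u' Qu IH|k' i r u' Hr Qu IH] n y Ny.
- by rewrite Yvac; case: ifP => _ //; exact: NN0.
- by rewrite YZl; apply: NN_sc; apply: IH.
- have [N0 HN] := va_borcherds HV (h i) u' y 0 n r.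
  have := HN N0.+1 (leqnSn _).
  rewrite big_ord_recl big1 ?addr0; last by move=> l _; rewrite /= bump0n gb0S scale0r.
  rewrite /= gb0 scale1r add0r => ->.
  apply: NN_sum => l; apply: NN_sc; apply: NN_add.
    by apply: NN_h; apply: IH.
  by apply: NN_opp; apply: NN_sc; apply: IH; apply: NN_h.
Qed.

Lemma NN_Y x n y : NN x -> NN y -> NN (Y x n y).
Proof.
move=> Hx Hy; elim: Hx => [|k u w Qu Nw IH]; first by rewrite Y0l; exact: NN0.
by rewrite YDl; apply: NN_add IH; apply: Q_Y Qu n y Hy.
Qed.

Lemma NN_all v : NN v.
Proof.
have G := heis_gen HH; move: v; apply: (G NN).
- exact: (NN_Q Qvac).
- move=> s [i ->]; rewrite -(Ycr (h i)).
  by apply: NN_Q; apply: (Qh i _ Qvac).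
- by move=> c x y Hx Hy; apply: NN_add => //; apply: NN_sc.
- by move=> x y n Hx Hy; apply: NN_Y.
Qed.

Lemma hvec0 : hvec h (0 : 'cV[C]_d) = 0.
Proof. by rewrite /hvec big1 // => i _; rewrite mxE scale0r. Qed.
Lemma hvecD x y : hvec h (x + y) = hvec h x + hvec h y.
Proof. by rewrite /hvec -big_split; apply: eq_bigr => i _; rewrite mxE scalerDl. Qed.
Lemma hvecZ c x : hvec h (c *: x) = c *: hvec h x.
Proof. by rewrite /hvec scaler_sumr; apply: eq_bigr => i _; rewrite mxE scalerA. Qed.
Lemma hvec_delta i : hvec h (delta_mx i 0) = h i.
Proof.
rewrite /hvec (eq_bigr (fun j => if j == i then h j else 0)) ?sum_if // => j _.
by rewrite mxE eqxx andbT; case: eqP => _; rewrite ?scale1r ?scale0r.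
Qed.

Lemma vac_weight k c : k != 0 -> Y om 1 (c *: vac) = k%:~R *: (c *: vac) -> c = 0.
Proof.
move=> Hk; rewrite YZr L0vac scaler0 scalerA => /esym/eqP.
rewrite scaler_eq0 (negbTE (heis_nonzero HH)) orbF mulf_eq0 intr_eq0 (negbTE Hk) /=.
by move/eqP.
Qed.

Definition Pw k u := Y om 1 u = k%:~R *: u /\ (k <= 0 -> exists c, u = c *: vac) /\
  (k = 1 -> exists x : 'cV[C]_d, u = hvec h x).

Lemma Q_P k u : Q k u -> Pw k u.
Proof.
elim=> [|k' c u' Qu [E1 [E2 E3]]|k' i n u' Hn Qu [E1 [E2 E3]]].
- split; first by rewrite L0vac scale0r.
  by split=> [_|//]; exists 1; rewrite scale1r.
- split; first by rewrite YZr E1 !scalerA mulrC.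
  split=> [Hk|Hk].
    by have [c' ->] := E2 Hk; exists (c * c'); rewrite scalerA.
  by have [x ->] := E3 Hk; exists (c *: x); rewrite hvecZ.
- have Hk : k' <= 0 -> u' = 0 \/ (k' = 0 /\ exists c, u' = c *: vac).
    move=> Hk; have [c Ec] := E2 Hk.
    have [->|Hk0] := eqVneq k' 0; first by right; split=> //; exists c.
    by left; rewrite Ec (@vac_weight k' c Hk0) ?scale0r // -Ec.
  split.
    by rewrite L0h E1 YZr -scalerBl intrB.
  split=> [Hkn|Hkn].
    have [->|[Ek _]] := Hk ltac:(lia); first by exists 0; rewrite Y0r scale0r.
    exfalso; lia.
  have [->|[Ek [c ->]]] := Hk ltac:(lia); first by exists 0; rewrite Y0r hvec0.
  have -> : n = -1 by lia.
  by exists (c *: delta_mx i 0); rewrite YZr Ycr hvecZ hvec_delta.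
Qed.

Lemma L0hvec x : Y om 1 (hvec h x) = hvec h x.
Proof.
rewrite /hvec Ysumr; apply: eq_bigr => i _; rewrite YZr; congr (_ *: _).
by rewrite -{1}(Ycr (h i)) L0h L0vac Y0r add0r scaleN1r opprK Ycr.
Qed.

Lemma L0sum (s : seq (C * V)) :
  Y om 1 (\sum_(p <- s) p.2) = \sum_(p <- s) Y om 1 p.2.
Proof. exact: Ysumr. Qed.

Lemma eig_n n : forall (s : seq (C * V)) (lam : C), size s = n ->
  (forall p, p \in s -> Y om 1 p.2 = p.1 *: p.2 /\ p.1 != lam) ->
  Y om 1 (\sum_(p <- s) p.2) = lam *: \sum_(p <- s) p.2 -> \sum_(p <- s) p.2 = 0.
Proof.
elim: n => [|n IH] [|p s] lam //=; first by rewrite big_nil.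
move=> [Hs] Hp HT.
have [Ep Hpl] := Hp p (mem_head _ _).
set W := \sum_(q <- s) q.2.
have HW : Y om 1 W = \sum_(q <- s) q.1 *: q.2.
  rewrite L0sum big_seq_cond [RHS]big_seq_cond; apply: eq_bigr => q /andP [Hq _].
  by case: (Hp q); rewrite ?in_cons ?Hq ?orbT.
rewrite big_cons in HT *; rewrite -/W in HT *.
pose s2 := [seq (q.1, (q.1 - p.1) *: q.2) | q <- s].
have E2 : \sum_(q <- s2) q.2 = (lam - p.1) *: (p.2 + W).
  rewrite big_map /=.
  rewrite (eq_bigr (fun q => q.1 *: q.2 - p.1 *: q.2)); last by move=> q _; rewrite scalerBl.
  rewrite sumrB -HW -scaler_sumr -/W.
  have : Y om 1 W = lam *: (p.2 + W) - p.1 *: p.2 by rewrite -HT YD Ep addrC addKr.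
  by move=> ->; rewrite scalerBl scalerDr [in RHS]scalerDr opprD addrA.
have H2 : \sum_(q <- s2) q.2 = 0.
  apply: (IH s2 lam); first by rewrite size_map.
  move=> q /mapP [q' Hq' ->] /=; split.
    case: (Hp q'); rewrite ?in_cons ?Hq' ?orbT // => Eq _.
    by rewrite YZr Eq !scalerA mulrC.
  by case: (Hp q'); rewrite ?in_cons ?Hq' ?orbT.
  by rewrite E2 YZr HT scalerA mulrC -scalerA.
move/eqP: H2; rewrite E2 scaler_eq0 subr_eq0 eq_sym (negbTE Hpl) /=.
  by move/eqP.
Qed.

Lemma V1 v : Y om 1 v = v -> exists x : 'cV[C]_d, v = hvec h x.
Proof.
have : exists x (s : seq (C * V)), v = hvec h x + \sum_(p <- s) p.2 /\
    forall p, p \in s -> Y om 1 p.2 = p.1 *: p.2 /\ p.1 != 1.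
  elim: (NN_all v) => [|k u w Qu Nw [x [s [Ew Hs]]]].
    by exists 0, [::]; rewrite hvec0 big_nil addr0.
  have [E1 [_ E3]] := Q_P Qu.
  have [Ek|Hk] := eqVneq k 1.
    have [x' Ex'] := E3 Ek; exists (x' + x), s; split=> //.
    by rewrite hvecD Ew Ex' addrA.
  exists x, ((k%:~R, u) :: s); split.
    by rewrite big_cons Ew addrCA.
  move=> p; rewrite in_cons => /orP [/eqP ->|Hp]; last exact: Hs.
  by split=> //=; rewrite (_ : 1 = 1%:~R) // eqr_int.
move=> [x [s [Ev Hs]]] HL.
exists x; rewrite Ev.
suff -> : \sum_(p <- s) p.2 = 0 by rewrite addr0.
apply: (eig_n (erefl (size s)) Hs).
have : Y om 1 (\sum_(p <- s) p.2) = Y om 1 v - Y om 1 (hvec h x) by rewrite Ev YD addrAC subrr add0r.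
by move=> ->; rewrite HL L0hvec scale1r {1}Ev addrAC subrr add0r.
Qed.

Definition X2 (x : 'cV[C]_d) : V := \sum_(m < d) x m 0 *: Y (h m) (-2) vac.

Lemma Om0hvec a b x : Y (Om a b) 0 (hvec h x) = X2 (Amat a *m x).
Proof.
rewrite /hvec /X2 Ysumr.
rewrite (eq_bigr (fun k => \sum_(m < d) (x k 0 * Amat a m k) *: Y (h m) (-2) vac)); last first.
  by move=> k _; rewrite YZr Om0 scaler_sumr; apply: eq_bigr => m _; rewrite scalerA.
rewrite exchange_big; apply: eq_bigr => m _ /=; rewrite mxE scaler_suml.
by apply: eq_bigr => k _; rewrite mulrC.
Qed.

Lemma om0hvec x : Y om 0 (hvec h x) = X2 x.
Proof. by rewrite omega0E Om0hvec Amat_a0 mul1mx. Qed.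

Lemma X2B x y : X2 x - X2 y = X2 (x - y).
Proof. by rewrite /X2 -sumrB; apply: eq_bigr => m _; rewrite !mxE scalerBl. Qed.

Lemma X2_eq0 x : X2 x = 0 -> x = 0.
Proof.
move=> Hx; apply/matrixP => j k; rewrite ord1 mxE.
have : Y (h j) 2 (X2 x) = (x j 0 * 2%:R) *: vac.
  rewrite /X2 Ysumr (eq_bigr (fun m => if m == j then (x m 0 * 2%:R) *: vac else 0)).
    by rewrite (sum_if (fun m => (x m 0 * 2%:R) *: vac)).
  move=> m _; rewrite YZr hcomm' hvac // Y0r add0r eq_sym.
  by rewrite subrr eqxx andbT; case: eqP => _; rewrite ?scale0r ?scaler0 ?scalerA.
rewrite Hx Y0r => /esym/eqP; rewrite scaler_eq0 (negbTE (heis_nonzero HH)) orbF.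
by rewrite mulf_eq0 (negbTE two_neq0) orbF => /eqP.
Qed.

Lemma Amat_sym (a : 'I_d -> 'I_d -> C) (i j : 'I_d) : Amat a i j = Amat a j i.
Proof.
rewrite !mxE; case: (eqVneq i j) => [->//|Hne].
case: (ltngtP i j) => H //.
by rewrite (val_inj H).
Qed.

Lemma hx1 a b k : Y (h k) 1 (Om a b) = \sum_(p < d) Amat a p k *: h p.
Proof. by rewrite hOm //= addr0. Qed.

Lemma hx11 a b l k : Y (h l) 1 (Y (h k) 1 (Om a b)) = Amat a l k *: vac.
Proof.
rewrite hx1 Ysumr (eq_bigr (fun p => if p == l then Amat a p k *: vac else 0)).
  by rewrite (sum_if (fun p => Amat a p k *: vac)).
by move=> p _; rewrite YZr hrel //= eq_sym; case: eqP => _; rewrite ?scaler0.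
Qed.

Lemma Tcomp a' b' a b l k :
  Y (h l) 1 (Y (h k) 1 (Y (Om a' b') 1 (Om a b))) =
  (\sum_(m < d) Amat a' m l * Amat a m k + \sum_(m < d) Amat a' m k * Amat a l m) *: vac.
Proof.
have c1 k' w : Y (h k') 1 (Y (Om a' b') 1 w) =
    Y (Om a' b') 1 (Y (h k') 1 w) + \sum_(m < d) Amat a' m k' *: Y (h m) 1 w.
  have := cOm a' b' k' 1 w; rewrite (_ : (1%:~R : C) = 1) // scale1r => <-.
  by rewrite addrC subrK.
rewrite c1 YD c1 hx11 YZr.
rewrite (_ : Y (Om a' b') 1 vac = 0); last exact: Yann.
rewrite scaler0 add0r Ysumr scalerDl !scaler_suml.
by congr (_ + _); apply: eq_bigr => m _; rewrite ?YZr hx11 scalerA.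
Qed.

Lemma Asq a b : semi_conformal Y vac om (Om a b) -> Amat a *m Amat a = Amat a.
Proof.
case=> U [HU Heq].
have E := Heq 1 (Om a b) ltac:(done) (sub_w HU).
apply/matrixP => l k.
have s1 : \sum_(m < d) (1%:M : 'M[C]_d) m l * Amat a m k = Amat a l k.
  rewrite (eq_bigr (fun m => if m == l then Amat a m k else 0)); last first.
    by move=> m _; rewrite mxE; case: eqP => _; rewrite ?mul1r ?mul0r.
  by rewrite -big_mkcond big_pred1_eq.
have s2 : \sum_(m < d) (1%:M : 'M[C]_d) m k * Amat a l m = Amat a l k.
  rewrite (eq_bigr (fun m => if m == k then Amat a l m else 0)); last first.
    by move=> m _; rewrite mxE; case: eqP => _; rewrite ?mul1r ?mul0r.
  by rewrite -big_mkcond big_pred1_eq.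
have s3 : \sum_(m < d) Amat a m l * Amat a m k = (Amat a *m Amat a) l k.
  by rewrite mxE; apply: eq_bigr => m _; rewrite Amat_sym.
have s4 : \sum_(m < d) Amat a m k * Amat a l m = (Amat a *m Amat a) l k.
  by rewrite mxE; apply: eq_bigr => m _; rewrite mulrC.
have := Tcomp a0 (fun _ => 0) a b l k; rewrite -omega0E E Tcomp Amat_a0 s1 s2 s3 s4
=> /esym/eqP; rewrite -subr_eq0 -scalerBl scaler_eq0.
rewrite (negbTE (heis_nonzero HH)) orbF -!mulr2n -mulrnBl.
by rewrite -mulr_natr mulf_eq0 (negbTE two_neq0) orbF subr_eq0 => /eqP.
Qed.

Lemma main_sec a b : semi_conformal Y vac om (Om a b) ->
  (forall v : V,
     (Y om 1 v = v /\ Y om 0 v - Y (Om a b) 0 v = 0)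
     <-> exists y : 'cV[C]_d, v = hvec h (Amat a *m y)) /\
  (forall v : V,
     (Y om 1 v = v /\ Y (Om a b) 0 v = 0)
     <-> exists x : 'cV[C]_d, v = hvec h x /\ Amat a *m x = 0).
Proof.
move=> Hsc; have A2 := Asq Hsc.
split=> v; split.
- move=> [H1 H2]; have [x Ex] := V1 H1.
  move: H2; rewrite Ex om0hvec Om0hvec X2B => /X2_eq0 /eqP.
  rewrite subr_eq0 => /eqP Hx; exists x; by rewrite -Hx.
- move=> [y ->]; split; first exact: L0hvec.
  by rewrite om0hvec Om0hvec X2B mulmxA A2 subrr /X2 big1 // => m _; rewrite mxE scale0r.
- move=> [H1 H2]; have [x Ex] := V1 H1.
  exists x; split=> //.
  by move: H2; rewrite Ex Om0hvec => /X2_eq0.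
- move=> [x [-> Hx]]; split; first exact: L0hvec.
  by rewrite Om0hvec Hx /X2 big1 // => m _; rewrite mxE scale0r.
Qed.

End Work.

Unset Implicit Arguments.
Theorem proposition4p1 (C : numClosedFieldType) (d : nat) (V : lmodType C)
  (Y : V -> int -> V -> V) (vac : V) (h : 'I_d -> V)
  (a : 'I_d -> 'I_d -> C) (b : 'I_d -> C) :
  is_heisenberg Y vac h ->
  semi_conformal Y vac (omega0 Y h) (omega' Y vac h a b) ->
  (forall v : V,
     (Y (omega0 Y h) 1 v = v /\
      Y (omega0 Y h) 0 v - Y (omega' Y vac h a b) 0 v = 0)
     <-> exists y : 'cV[C]_d, v = hvec h (Amat a *m y)) /\
  (forall v : V,
     (Y (omega0 Y h) 1 v = v /\ Y (omega' Y vac h a b) 0 v = 0)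
     <-> exists x : 'cV[C]_d, v = hvec h x /\ Amat a *m x = 0).
Proof. by move=> HH; apply: main_sec. Qed.
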